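(* For the logic $\mathsf{PWK}_e^{\square}$, it holds that $\Gamma\vdash\varphi$ iff there exist some formulas $\gamma_1,\dots,\gamma_n\in \Gamma$ such that $\vdash\neg J_{0}\gamma_1\wedge\dots\wedge\neg J_{0}\gamma_n\to \neg J_{0}\varphi$.
   Context: Formulas are built over a denumerable set of propositional variables in the language $\neg,\vee,J_{2},\square,0,1$ of type $(1,2,1,1,0,0)$, where $J_2\varphi$ reads ''$\varphi$ is true''. Abbreviations: $\varphi\land\psi:=\neg(\neg\varphi\lor\neg\psi)$, $\varphi\to\psi:=\neg\varphi\lor\psi$, $\varphi\leftrightarrow\psi:=(\varphi\to\psi)\land(\psi\to\varphi)$, $J_0\varphi:=J_2\neg\varphi$, $J_1\varphi:=\neg(J_2\varphi\lor J_2\neg\varphi)$, $+\varphi:=\neg J_1\varphi$, $\varphi\equiv\psi:=(J_2\varphi\leftrightarrow J_2\psi)\land(J_0\varphi\leftrightarrow J_0\psi)$, $\diamond\varphi:=\neg\square\neg\varphi$. The logic $\mathsf{PWK}_e^{\square}$ (with consequence relation $\vdash$) is given by the Hilbert-style axiomatization with axioms: $\varphi\lor\varphi\equiv\varphi$; $\varphi\lor\psi\equiv\psi\lor\varphi$; $(\varphi\lor\psi)\lor\chi\equiv\varphi\lor(\psi\lor\chi)$; $\varphi\lor 0\equiv\varphi$; $\neg\neg\varphi\equiv\varphi$; $\neg(\varphi\lor\psi)\equiv\neg\varphi\land\neg\psi$; $\neg 1\equiv 0$; $\varphi\land(\psi\lor\chi)\equiv(\varphi\land\psi)\lor(\varphi\land\chi)$;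 $J_0J_2\varphi\leftrightarrow\neg J_2\varphi$; $J_2\varphi\leftrightarrow\neg(J_0\varphi\lor J_1\varphi)$; $J_2\varphi\lor\neg J_2\varphi\leftrightarrow 1$; $J_2(\varphi\lor\psi)\leftrightarrow(J_2\varphi\land J_2\psi)\lor(J_2\varphi\land J_0\psi)\lor(J_0\varphi\land J_2\psi)$; $\square(J_2\varphi\to J_2\psi)\to(\square J_2\varphi\to\square J_2\psi)$; $\square\varphi\leftrightarrow\square\neg J_0\varphi$; $+\varphi\leftrightarrow+\square\varphi$; and rules: $J_2\varphi\leftrightarrow J_2\psi,\ J_0\varphi\leftrightarrow J_0\psi\vdash\varphi\equiv\psi$; $\varphi\dashv\vdash\neg J_0\varphi\leftrightarrow 1$; necessitation: if $\vdash\varphi$ then $\vdash\square\varphi$. Its propositional base is external paraconsistent weak Kleene logic, the logic of the three-element weak Kleene matrix with designated values $\{1,1/2\}$ (non-falsity preservation). *)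

(* Defs.v *)
From Stdlib Require Import List.
Import ListNotations.
Set Implicit Arguments.

Inductive form : Type :=
| Var  : nat -> form
| Neg  : form -> form
| Or   : form -> form -> form
| J2   : form -> form
| Box  : form -> form
| Zero : form
| One  : form.

Definition And (p q : form) : form := Neg (Or (Neg p) (Neg q)).
Definition Imp (p q : form) : form := Or (Neg p) q.
Definition Iff (p q : form) : form := And (Imp p q) (Imp q p).
Definition J0 (p : form) : form := J2 (Neg p).
Definition J1 (p : form) : form := Neg (Or (J2 p) (J2 (Neg p))).
Definition Plus (p : form) : form := Neg (J1 p).
Definition Equiv (p q : form) : form :=
  And (Iff (J2 p) (J2 q)) (Iff (J0 p) (J0 q)).
Definition Dia (p : form) : form := Neg (Box (Neg p)).

Inductive axiom : form -> Prop :=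
| ax1  p       : axiom (Equiv (Or p p) p)
| ax2  p q     : axiom (Equiv (Or p q) (Or q p))
| ax3  p q r   : axiom (Equiv (Or (Or p q) r) (Or p (Or q r)))
| ax4  p       : axiom (Equiv (Or p Zero) p)
| ax5  p       : axiom (Equiv (Neg (Neg p)) p)
| ax6  p q     : axiom (Equiv (Neg (Or p q)) (And (Neg p) (Neg q)))
| ax7          : axiom (Equiv (Neg One) Zero)
| ax8  p q r   : axiom (Equiv (And p (Or q r)) (Or (And p q) (And p r)))
| ax9  p       : axiom (Iff (J0 (J2 p)) (Neg (J2 p)))
| ax10 p       : axiom (Iff (J2 p) (Neg (Or (J0 p) (J1 p))))
| ax11 p       : axiom (Iff (Or (J2 p) (Neg (J2 p))) One)
| ax12 p q     : axiom (Iff (J2 (Or p q))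
                            (Or (Or (And (J2 p) (J2 q)) (And (J2 p) (J0 q)))
                                (And (J0 p) (J2 q))))
| axK  p q     : axiom (Imp (Box (Imp (J2 p) (J2 q)))
                            (Imp (Box (J2 p)) (Box (J2 q))))
| axB  p       : axiom (Iff (Box p) (Box (Neg (J0 p))))
| axP  p       : axiom (Iff (Plus p) (Plus (Box p))).

(* The three-element weak Kleene matrix, designated {1, 1/2}. *)
Inductive val : Type := V0 | Vh | V1.

Definition vneg (a : val) : val :=
  match a with V0 => V1 | Vh => Vh | V1 => V0 end.
Definition vor (a b : val) : val :=
  match a, b with
  | Vh, _ | _, Vh => Vh
  | V0, V0 => V0
  | _, _ => V1
  end.
Definition vJ2 (a : val) : val := match a with V1 => V1 | _ => V0 end.
Definition desig (a : val) : Prop := a <> V0.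

(* Evaluation of formulas in the propositional base: variables and
   box-formulas (treated as propositionally atomic) get arbitrary values
   from e; all other connectives are interpreted in the matrix. *)
Fixpoint eval (e : form -> val) (p : form) : val :=
  match p with
  | Var n => e (Var n)
  | Box q => e (Box q)
  | Neg q => vneg (eval e q)
  | Or q r => vor (eval e q) (eval e r)
  | J2 q => vJ2 (eval e q)
  | Zero => V0
  | One => V1
  end.

(* Finitary rules of the propositional base PWK_e (substitution instances):
   Delta |= phi in the weak Kleene matrix with designated {1,1/2}. *)
Definition base_valid (Delta : list form) (phi : form) : Prop :=
  forall e : form -> val,
    (forall d, In d Delta -> desig (eval e d)) -> desig (eval e phi).

Inductive deriv : (form -> Prop) -> form -> Prop :=
| d_hyp  (G : form -> Prop) p : G p -> deriv G p
| d_ax   (G : form -> Prop) p : axiom p -> deriv G p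
| d_base (G : form -> Prop) (Delta : list form) p :
    base_valid Delta p -> (forall d, In d Delta -> deriv G d) -> deriv G p
| d_equiv (G : form -> Prop) p q :
    deriv G (Iff (J2 p) (J2 q)) -> deriv G (Iff (J0 p) (J0 q)) ->
    deriv G (Equiv p q)
| d_toJ  (G : form -> Prop) p : deriv G p -> deriv G (Iff (Neg (J0 p)) One)
| d_fromJ (G : form -> Prop) p : deriv G (Iff (Neg (J0 p)) One) -> deriv G p
| d_nec  (G : form -> Prop) p :
    deriv (fun _ => False) p -> deriv G (Box p).

Definition theorem (p : form) : Prop := deriv (fun _ => False) p.

Fixpoint bigAnd (l : list form) : form :=
  match l with
  | [] => One
  | [a] => a
  | a :: l' => And a (bigAnd l')
  end.

(* Main.v *)
Require Import Defs.
From Stdlib Require Import List.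
Import ListNotations.

Definition NJ (g : form) : form := Neg (J0 g).

Lemma nj_eval e g : eval e (NJ g) = match eval e g with V0 => V0 | _ => V1 end.
Proof. unfold NJ, J0; simpl; destruct (eval e g); reflexivity. Qed.

Lemma desig_V1 : desig V1. Proof. unfold desig; discriminate. Qed.
Lemma desig_Vh : desig Vh. Proof. unfold desig; discriminate. Qed.
Lemma ndesig_V0 : ~ desig V0. Proof. unfold desig; congruence. Qed.

Lemma bigAnd_cons e x m : eval e (bigAnd (x :: m)) = eval e (And x (bigAnd m)).
Proof. destruct m; simpl; [destruct (eval e x)|]; reflexivity. Qed.

Lemma bigAnd_eval e l :
  ((forall g, In g l -> desig (eval e g)) /\ eval e (bigAnd (map NJ l)) = V1) \/
  ((exists g, In g l /\ ~ desig (eval e g)) /\ eval e (bigAnd (map NJ l)) = V0).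
Proof.
  induction l as [|a l IH].
  - left; split; [intros g []| reflexivity].
  - simpl map. rewrite bigAnd_cons. unfold And; cbn [eval].
    rewrite nj_eval.
    destruct (eval e a) eqn:Ha.
    + right; split; [exists a; split; [left; reflexivity| rewrite Ha; apply ndesig_V0]|].
      destruct IH as [[_ H]|[_ H]]; rewrite H; reflexivity.
    + destruct IH as [[H1 H]|[[g [H1 H2]] H]]; rewrite H.
      * left; split; [|reflexivity]. intros g [<-|Hg]; [rewrite Ha; apply desig_Vh| auto].
      * right; split; [exists g; split; [right; exact H1| exact H2]|reflexivity].
    + destruct IH as [[H1 H]|[[g [H1 H2]] H]]; rewrite H.
      * left; split; [|reflexivity]. intros g [<-|Hg]; [rewrite Ha; apply desig_V1| auto].
      * right; split; [exists g; split; [right; exact H1| exact H2]|reflexivity].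
Qed.

Lemma imp_V1 e a b : desig (eval e (Imp a b)) -> eval e a = V1 -> desig (eval e b).
Proof. unfold Imp; simpl; intros H Ha; rewrite Ha in H; destruct (eval e b); simpl in *; auto. Qed.

Lemma imp_V0 e a b : eval e a = V0 -> desig (eval e (Imp a b)).
Proof. unfold Imp; simpl; intros Ha; rewrite Ha; destruct (eval e b); simpl;
  auto using desig_V1, desig_Vh. Qed.

Lemma nj_desig e g : desig (eval e (NJ g)) <-> desig (eval e g).
Proof. rewrite nj_eval; destruct (eval e g); split; auto using desig_V1, desig_Vh. Qed.

Definition P (G : form -> Prop) (phi : form) : Prop :=
  exists gs : list form, (forall g, In g gs -> G g) /\
    theorem (Imp (bigAnd (map NJ gs)) (NJ phi)).

Lemma collect G Delta : (forall d, In d Delta -> P G d) ->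
  exists gs T, (forall g, In g gs -> G g) /\ (forall t, In t T -> theorem t) /\
   forall e, (forall t, In t T -> desig (eval e t)) ->
      (forall g, In g gs -> desig (eval e g)) -> forall d, In d Delta -> desig (eval e d).
Proof.
  induction Delta as [|d Delta IH]; intros H.
  - exists [], []; repeat split; try (intros ? []); intros e _ _ ? [].
  - destruct IH as [gs [T [H1 [H2 H3]]]]; [intros; apply H; right; auto|].
    destruct (H d (or_introl eq_refl)) as [gd [Hd1 Hd2]].
    exists (gd ++ gs), (Imp (bigAnd (map NJ gd)) (NJ d) :: T).
    split; [intros g Hg; apply in_app_or in Hg; destruct Hg; auto|].
    split; [intros t [<-|Ht]; auto|].
    intros e HT Hg d' [<-|Hd'].
    + apply nj_desig. apply (imp_V1 e (bigAnd (map NJ gd))); [apply HT; left; auto|].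
      destruct (bigAnd_eval e gd) as [[_ E]|[[g [Hg1 Hg2]] _]]; auto.
      exfalso; apply Hg2, Hg, in_or_app; auto.
    + apply (H3 e); auto. intros; apply HT; right; auto.
      intros; apply Hg, in_or_app; auto.
Qed.

Lemma step G Delta p : (forall d, In d Delta -> P G d) -> base_valid Delta p -> P G p.
Proof.
  intros H Hv. destruct (collect G Delta H) as [gs [T [H1 [H2 H3]]]].
  exists gs; split; auto.
  apply (d_base (Delta:=T)).
  2: intros; apply H2; auto.
  - intros e HT.
    destruct (bigAnd_eval e gs) as [[Hg E]|[_ E]]; [|apply imp_V0; auto].
    unfold Imp. simpl. rewrite E. simpl.
    assert (Hp : desig (eval e p)) by (apply Hv; apply H3; auto).
    destruct (eval e p); simpl; auto using desig_V1, desig_Vh; exfalso; auto.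
Qed.

Lemma thm_P G p : theorem p -> P G p.
Proof.
  intros Hp. exists []; split; [intros ? []|].
  apply (d_base (Delta:=[p])); [|intros d [<-|[]]; exact Hp].
  intros e He. simpl bigAnd. unfold Imp. simpl.
  assert (D : desig (eval e p)) by (apply He; left; auto).
  destruct (eval e p); simpl; auto using desig_V1, desig_Vh; exfalso; auto.
Qed.

Lemma sound G phi : deriv G phi -> P G phi.
Proof.
  induction 1.
  - exists [p]; split; [intros g [<-|[]]; auto|].
    apply (d_base (Delta:=[])); [|intros ? []].
    intros e _. simpl. unfold Imp; simpl. destruct (eval e p);
      simpl; auto using desig_V1, desig_Vh.
  - apply thm_P, d_ax; auto.
  - apply (step G Delta); auto.
  - apply (step G [Iff (J2 p) (J2 q); Iff (J0 p) (J0 q)]).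
    + intros d [<-|[<-|[]]]; auto.
    + intros e He. assert (A := He _ (or_introl eq_refl)).
      assert (B := He _ (or_intror (or_introl eq_refl))).
      change (desig (vneg (vor (vneg (eval e (Iff (J2 p) (J2 q)))) (vneg (eval e (Iff (J0 p) (J0 q))))))). revert A B.
      destruct (eval e (Iff (J2 p) (J2 q))), (eval e (Iff (J0 p) (J0 q)));
        simpl; auto using desig_V1, desig_Vh; intros; exfalso; auto.
  - apply (step G [p]); [intros d [<-|[]]; auto|].
    intros e He. assert (A := He _ (or_introl eq_refl)).
    revert A. unfold Iff, And, Imp, J0. simpl.
    destruct (eval e p); simpl; auto using desig_V1, desig_Vh.
  - apply (step G [Iff (Neg (J0 p)) One]); [intros d [<-|[]]; auto|].
    intros e He. assert (A := He _ (or_introl eq_refl)).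
    revert A. unfold Iff, And, Imp, J0. simpl.
    destruct (eval e p); simpl; auto using desig_V1, desig_Vh.
  - apply thm_P, d_nec; auto.
Qed.

Lemma mono G0 t : deriv G0 t -> forall G, (forall x, G0 x -> G x) -> deriv G t.
Proof.
  induction 1; intros G' HG.
  - apply d_hyp; auto.
  - apply d_ax; auto.
  - apply (d_base (Delta:=Delta)); auto.
  - apply d_equiv; auto.
  - apply d_toJ; auto.
  - apply d_fromJ; auto.
  - apply d_nec; auto.
Qed.

Theorem mainTheorem20 (G : form -> Prop) (phi : form) :
  deriv G phi <->
  exists gs : list form,
    (forall g, In g gs -> G g) /\
    theorem (Imp (bigAnd (map (fun g => Neg (J0 g)) gs)) (Neg (J0 phi))).
Proof.
  split.
  - intros H. exact (sound G phi H).
  - intros [gs [H1 H2]].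
    apply (d_base (Delta:=Imp (bigAnd (map NJ gs)) (NJ phi) :: gs)).
    + intros e He.
      destruct (bigAnd_eval e gs) as [[_ E]|[[g [Hg1 Hg2]] _]].
      * apply nj_desig. apply (imp_V1 e (bigAnd (map NJ gs))); auto. apply He; left; auto.
      * exfalso; apply Hg2, He; right; auto.
    + intros d [<-|Hd].
      * apply (mono _ _ H2); intros _ [].
      * apply d_hyp; auto.
Qed.
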